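(* Let $\varphi$ be a rule defined on $\mathcal{E}_{\mathcal{SP}}$. Then $\varphi$ satisfies own-peak-onliness, efficiency, the equal division guarantee, and not obvious manipulability (NOM) if and only if $\varphi$ is a simple rule.
   Context: Let $N=\{1,\dots,n\}$ be a finite set of agents. A preference $R_i$ is a continuous complete preorder on $\mathbb{R}_+\cup\{\infty\}$, with strict part $P_i$ and indifference $I_i$. Its peak is $p(R_i)=\{x: xR_iy \text{ for all } y\in\mathbb{R}_+\cup\{\infty\}\}$; when it is a singleton we identify it with its element. $R_i$ is single-peaked if $p(R_i)$ is a singleton and for all $x,x'\in\mathbb{R}_+$, $xP_ix'$ whenever $x'<x\le p(R_i)$ or $p(R_i)\le x<x'$. $\mathcal{SP}$ is the set of single-peaked preferences. An economy is a pair $(R,\Omega)$ with $R=(R_j)_{j\in N}\in\mathcal{SP}^n$ and $\Omega>0$; $\mathcal{E}_{\mathcal{SP}}$ is the set of all economies. A rule is a map $\varphi:\mathcal{E}_{\mathcal{SP}}\to\mathbb{R}^n_+$ with $\sum_{j\in N}\varphi_j(R,\Omega)=\Omega$ for every economy. Properties: Efficiency: for no economy is there $x\in\mathbb{R}^n_+$ with $\sum_j x_j=\Omega$, $x_iR_i\varphi_i(R,\Omega)$ for all $i$ and $x_iP_i\varphi_i(R,\Omega)$ for some $i$. Own-peak-onliness: if $p(R_i')=p(R_i)$ then $\varphi_i(R,\Omega)=\varphi_i(R_i',R_{-i},\Omega)$. Equal division guarantee: for every economy $(R,\Omega)$ and $i$ with $p(R_i)=\Omega/n$, $\varphi_i(R,\Omega)\,I_i\,\Omega/n$.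 Option set: $O^\varphi(R_i,\Omega)=\{\varphi_i(R_i,R_{-i},\Omega): R_{-i}\in\mathcal{SP}^{n-1}\}$. $R_i'$ is a manipulation of $\varphi$ at $(R_i,\Omega)$ if $\varphi_i(R_i',R_{-i},\Omega)P_i\varphi_i(R_i,R_{-i},\Omega)$ for some $R_{-i}$; it is an obvious manipulation if moreover for every $x'\in O^\varphi(R_i',\Omega)$ there is $x\in O^\varphi(R_i,\Omega)$ with $x'P_ix$. $\varphi$ is NOM if no agent $i$ has an obvious manipulation at any $(R_i,\Omega)$. Simple rules: for an economy let $z(R,\Omega)=\sum_j p(R_j)-\Omega$. Agent $i$ is simple if either $z(R,\Omega)\ge0$ and $p(R_i)<\Omega/n$, or $z(R,\Omega)\le 0$ and $p(R_i)>\Omega/n$; $N^+(R,\Omega)$ is the set of simple agents and $N^-(R,\Omega)=N\setminus N^+(R,\Omega)$. Let $E(R,\Omega)=\left|\Omega-\left(\sum_{j\in N^+}p(R_j)+|N^-|\frac{\Omega}{n}\right)\right|$. An own-peak-only rule $\varphi$ is simple if for every economy and every $i$: $\varphi_i(R,\Omega)=p(R_i)$ if $i\in N^+(R,\Omega)$; $\varphi_i(R,\Omega)=\frac{\Omega}{n}+\nu_i$ if $i\in N^-(R,\Omega)$ and $z(R,\Omega)\ge0$; $\varphi_i(R,\Omega)=\frac{\Omega}{n}-\nu_i$ if $i\in N^-(R,\Omega)$ and $z(R,\Omega)\le0$; where the numbers $\nu_i=\nu_i(R,\Omega)$ satisfy $0\le\nu_i\le|p(R_i)-\frac{\Omega}{n}|$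 and $\sum_{j\in N^-(R,\Omega)}\nu_j=E(R,\Omega)$. *)

(* Defs.v *)
(* reals are an arbitrary 'R : realType';
   the consumption space R_+ \cup {oo} is modelled as [0, +oo] inside \bar R. *)
From HB Require Import structures.
From mathcomp Require Import all_boot all_order all_algebra.
From mathcomp Require Import all_classical all_reals.
From mathcomp Require Import topology ereal.
Set Implicit Arguments. Unset Strict Implicit. Unset Printing Implicit Defensive.
Import Order.TTheory GRing.Theory Num.Theory.
Local Open Scope ring_scope.
Local Open Scope classical_set_scope.

Section Defs.
Variable R : realType.

Definition cons_set : set (\bar R) := [set x | (0 <= x)%E].

(* a preference is a binary relation ("x R_i y": x is at least as good as y) *)
Definition pref := \bar R -> \bar R -> Prop.

Definition strict (Ri : pref) x y := Ri x y /\ ~ Ri y x.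
Definition indiff (Ri : pref) x y := Ri x y /\ Ri y x.

Definition complete_preorder (Ri : pref) :=
  (forall x, cons_set x -> Ri x x) /\
  (forall x y z, cons_set x -> cons_set y -> cons_set z ->
     Ri x y -> Ri y z -> Ri x z) /\
  (forall x y, cons_set x -> cons_set y -> Ri x y \/ Ri y x).

Definition continuous_pref (Ri : pref) :=
  forall x, cons_set x ->
    closed [set y | cons_set y /\ Ri y x] /\ closed [set y | cons_set y /\ Ri x y].

Definition preference (Ri : pref) := complete_preorder Ri /\ continuous_pref Ri.

Definition peak_set (Ri : pref) : set (\bar R) :=
  [set x | cons_set x /\ forall y, cons_set y -> Ri x y].

(* p(R_i) as an element (meaningful when the peak set is a singleton) *)
Definition peak (Ri : pref) : \bar R := xget 0%E (peak_set Ri).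

Definition single_peaked (Ri : pref) :=
  preference Ri /\
  (exists p, peak_set Ri = [set p]) /\
  (forall x x' : R, 0 <= x -> 0 <= x' ->
     ((x' < x /\ (x%:E <= peak Ri)%E) \/ ((peak Ri <= x%:E)%E /\ x < x')) ->
     strict Ri x%:E x'%:E).

Variable n : nat.

Definition profile := 'I_n -> pref.

Definition economy (Rp : profile) (Om : R) :=
  (forall j, single_peaked (Rp j)) /\ 0 < Om.

Definition upd (Rp : profile) (i : 'I_n) (Ri : pref) : profile :=
  fun j => if j == i then Ri else Rp j.

Definition ruleT := profile -> R -> 'I_n -> R.

Definition is_rule (phi : ruleT) :=
  forall Rp Om, economy Rp Om ->
    (forall j, 0 <= phi Rp Om j) /\ \sum_(j < n) phi Rp Om j = Om.

Definition efficient (phi : ruleT) :=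
  forall Rp Om, economy Rp Om ->
    ~ exists x : 'I_n -> R,
        (forall j, 0 <= x j) /\ \sum_(j < n) x j = Om /\
        (forall j, Rp j (x j)%:E (phi Rp Om j)%:E) /\
        (exists j, strict (Rp j) (x j)%:E (phi Rp Om j)%:E).

Definition own_peak_only (phi : ruleT) :=
  forall Rp Om i Ri', economy Rp Om -> single_peaked Ri' ->
    peak Ri' = peak (Rp i) -> phi Rp Om i = phi (upd Rp i Ri') Om i.

Definition equal_division_guarantee (phi : ruleT) :=
  forall Rp Om i, economy Rp Om -> peak (Rp i) = (Om / n%:R)%:E ->
    indiff (Rp i) (phi Rp Om i)%:E (Om / n%:R)%:E.

Definition option_set (phi : ruleT) (i : 'I_n) (Ri : pref) (Om : R) : set R :=
  [set y | exists Rp : profile,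
     (forall j, j != i -> single_peaked (Rp j)) /\ y = phi (upd Rp i Ri) Om i].

Definition manipulation (phi : ruleT) (i : 'I_n) (Ri Ri' : pref) (Om : R) :=
  exists Rp : profile, (forall j, j != i -> single_peaked (Rp j)) /\
    strict Ri (phi (upd Rp i Ri') Om i)%:E (phi (upd Rp i Ri) Om i)%:E.

Definition obvious_manipulation (phi : ruleT) (i : 'I_n) (Ri Ri' : pref) (Om : R) :=
  manipulation phi i Ri Ri' Om /\
  forall x', option_set phi i Ri' Om x' ->
    exists2 x, option_set phi i Ri Om x & strict Ri x'%:E x%:E.

Definition NOM (phi : ruleT) :=
  forall i Ri Ri' Om, single_peaked Ri -> single_peaked Ri' -> 0 < Om ->
    ~ obvious_manipulation phi i Ri Ri' Om.

Definition excess (Rp : profile) (Om : R) : \bar R :=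
  (\sum_(j < n) peak (Rp j) - Om%:E)%E.

Definition simple_agent (Rp : profile) (Om : R) (i : 'I_n) : bool :=
  `[< ((0 <= excess Rp Om)%E /\ (peak (Rp i) < (Om / n%:R)%:E)%E) \/
      ((excess Rp Om <= 0)%E /\ ((Om / n%:R)%:E < peak (Rp i))%E) >].

Definition Eterm (Rp : profile) (Om : R) : \bar R :=
  `| Om%:E - (\sum_(j < n | simple_agent Rp Om j) peak (Rp j)
              + (#|[set j | ~~ simple_agent Rp Om j]|%:R * (Om / n%:R))%:E) |%E.

Definition simple_rule (phi : ruleT) :=
  own_peak_only phi /\
  forall Rp Om, economy Rp Om ->
    exists nu : 'I_n -> R,
      (forall i, ~~ simple_agent Rp Om i ->
         0 <= nu i /\ ((nu i)%:E <= `| peak (Rp i) - (Om / n%:R)%:E |)%E) /\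
      (\sum_(j < n | ~~ simple_agent Rp Om j) (nu j)%:E = Eterm Rp Om)%E /\
      (forall i, simple_agent Rp Om i -> (phi Rp Om i)%:E = peak (Rp i)) /\
      (forall i, ~~ simple_agent Rp Om i ->
         ((0 <= excess Rp Om)%E -> phi Rp Om i = Om / n%:R + nu i) /\
         ((excess Rp Om <= 0)%E -> phi Rp Om i = Om / n%:R - nu i)).

End Defs.

(* Main.v *)
Require Import Defs.
From mathcomp Require Import all_boot all_order all_algebra.
From mathcomp Require Import all_classical all_reals.
From mathcomp Require Import topology ereal.
From mathcomp Require Import normedtype.
From mathcomp Require Import lra.
Set Implicit Arguments. Unset Strict Implicit. Unset Printing Implicit Defensive.
Import Order.TTheory GRing.Theory Num.Theory.
Local Open Scope ring_scope.
Local Open Scope classical_set_scope.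


Definition dK (R : realType) (p a b : R) (y : \bar R) : \bar R :=
  match y with
  | r%:E => (if r <= p then a * (p - r) else b * (r - p))%:E
  | _ => +oo%E
  end.

Definition mkpref (R : realType) (p a b : R) : pref R :=
  fun x y => (dK p a b x <= dK p a b y)%E.

Lemma dK_ge0 (R : realType) (p a b r : R) : 0 < a -> 0 < b ->
  0 <= (if r <= p then a * (p - r) else b * (r - p)).
Proof.
move=> a0 b0; case: ifP => rp.
  by apply: mulr_ge0; lra.
by apply: mulr_ge0; move/negbT: rp; rewrite -ltNge; lra.
Qed.

Lemma dK_le (R : realType) (p a b t r : R) : 0 < a -> 0 < b -> 0 <= t ->
  ((if r <= p then a * (p - r) else b * (r - p)) <= t) =
  ((p - t / a <= r) && (r <= p + t / b)).
Proof.
move=> a0 b0 t0.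
have ta : 0 <= t / a by apply: divr_ge0 => //; lra.
have tb : 0 <= t / b by apply: divr_ge0 => //; lra.
case: ifP => rp.
  rewrite -{1}(divfK (lt0r_neq0 a0) t) [_ / a * a]mulrC ler_pM2l //.
  by apply/idP/andP => [H|[H1 H2]]; [split|]; lra.
move/negbT: rp; rewrite -ltNge => rp.
rewrite -{1}(divfK (lt0r_neq0 b0) t) [_ / b * b]mulrC ler_pM2l //.
by apply/idP/andP => [H|[H1 H2]]; [split|]; lra.
Qed.

Lemma dK_ge (R : realType) (p a b t r : R) : 0 < a -> 0 < b -> 0 <= t -> 0 <= p ->
  ((0 <= r) && (t <= (if r <= p then a * (p - r) else b * (r - p)))) =
  (((0 <= r) && (r <= p - t / a)) || (p + t / b <= r)).
Proof.
move=> a0 b0 t0 p0.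
have ta : 0 <= t / a by apply: divr_ge0 => //; lra.
have tb : 0 <= t / b by apply: divr_ge0 => //; lra.
case: ifP => rp.
  rewrite -{1}(divfK (lt0r_neq0 a0) t) [_ / a * a]mulrC ler_pM2l //.
  apply/idP/idP => [/andP[H1 H2]|/orP[/andP[H1 H2]|H]].
  - by apply/orP; left; apply/andP; split; lra.
  - by apply/andP; split; lra.
  - have tb0 : t / b = 0 by lra.
    have -> : t = 0 by rewrite -(divfK (lt0r_neq0 b0) t) tb0 mul0r.
    by rewrite mul0r; apply/andP; split; lra.
move/negbT: rp; rewrite -ltNge => rp.
rewrite -{1}(divfK (lt0r_neq0 b0) t) [_ / b * b]mulrC ler_pM2l //.
apply/idP/idP => [/andP[H1 H2]|/orP[/andP[H1 H2]|H]].
- by apply/orP; right; lra.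
- lra.
- by apply/andP; split; lra.
Qed.

Lemma strict_lt (R : realType) (p a b : R) x y :
  (dK p a b x < dK p a b y)%E -> strict (mkpref p a b) x y.
Proof. by move=> h; split; rewrite /mkpref; [apply: ltW|rewrite leNgt h]. Qed.

Lemma mkpref_sp (R : realType) (p a b : R) : 0 <= p -> 0 < a -> 0 < b ->
  single_peaked (mkpref p a b) /\ peak (mkpref p a b) = p%:E.
Proof.
move=> p0 a0 b0.
have dpp : dK p a b p%:E = 0%E by rewrite /= lexx subrr mulr0.
have dge0 : forall y, (0 <= dK p a b y)%E.
  by case=> [r| |] //=; rewrite lee_fin; apply: dK_ge0.
have pset : peak_set (mkpref p a b) = [set p%:E].
  rewrite predeqE => x; split.
    case=> cx /(_ p%:E); rewrite /mkpref dpp; have : cons_set p%:E by rewrite /cons_set /= lee_fin.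
    move=> cp /(_ cp); case: x cx => [r| |] cr /=; last 2 first.
    - by rewrite leye_eq.
    - by move: cr; rewrite /cons_set /= leeNy_eq.
    rewrite lee_fin; case: ifP => rp.
      by rewrite pmulr_rle0 // => h; congr (_%:E); apply/eqP; rewrite eq_le rp; lra.
    by move/negbT: rp; rewrite -ltNge => rp; rewrite pmulr_rle0 // => h; exfalso; lra.
  move=> ->; split; first by rewrite /cons_set /= lee_fin.
  by move=> y _; rewrite /mkpref dpp.
have pk : peak (mkpref p a b) = p%:E.
  by rewrite /peak pset; apply: xget_unique => // y ->.
split => //; split; last split.
- split.
    split; first by move=> x _; rewrite /mkpref.
    split; first by move=> x y z _ _ _; rewrite /mkpref; apply: le_trans.
    by move=> x y _ _; rewrite /mkpref; case/orP: (le_total (dK p a b x) (dK p a b y)); [left|right].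
  move=> [r| |] cr; last 2 first.
  - split.
      rewrite (_ : [set y | _] = [set y | (0 <= y)%E]); first exact: closed_ereal_le_ereal.
      by rewrite predeqE => y /=; split => [[]|h] //; split => //; rewrite /mkpref leey.
    rewrite (_ : [set y | _] = [set y | (+oo <= y)%E]); first exact: closed_ereal_le_ereal.
    rewrite predeqE => -[s| |] /=; rewrite /cons_set /mkpref /= ?leye_eq //; split => // -[] //.
  - by move: cr; rewrite /cons_set /= leeNy_eq.
  move: cr; rewrite /cons_set /= lee_fin => r0; rewrite /mkpref /cons_set /=.
  set t := (if r <= p then _ else _).
  have t0 : 0 <= t by apply: dK_ge0.
  split.
    rewrite (_ : [set y | _] = [set y | (0 <= y)%E] `&` [set y | ((p - t / a)%:E <= y)%E]
       `&` [set y | (y <= (p + t / b)%:E)%E]).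
      by apply: closedI; [apply: closedI|]; apply: closed_ereal_le_ereal || apply: closed_ereal_ge_ereal.
    rewrite predeqE => -[s| |] /=; rewrite ?lee_fin.
    + rewrite dK_le //; split => [[-> /andP[-> ->]]|[[-> ->] ->]] //.
    + by rewrite leey; split => [[]|[[]]].
    + by split => [[]|[[]]].
  rewrite (_ : [set y | _] = ([set y | (0 <= y)%E] `&` [set y | (y <= (p - t / a)%:E)%E])
       `|` [set y | ((p + t / b)%:E <= y)%E]).
    apply: closedU; [apply: closedI|]; apply: closed_ereal_le_ereal || apply: closed_ereal_ge_ereal.
  rewrite predeqE => -[s| |] /=; rewrite ?lee_fin.
  + have E := dK_ge s a0 b0 t0 p0.
    split => [[h1 h2]|].
      have : ((0 <= s) && (s <= p - t / a)) || (p + t / b <= s) by rewrite -E h1 h2.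
      by case/orP => [/andP[h3 h4]|h]; [left|right].
    case=> [[h1 h2]|h].
      suff : (0 <= s) && (t <= (if s <= p then a * (p - s) else b * (s - p))) by case/andP.
      by rewrite E h1 h2.
    suff : (0 <= s) && (t <= (if s <= p then a * (p - s) else b * (s - p))) by case/andP.
    by rewrite E h orbT.
  + by rewrite /= !leey; split => // _; right.
  + by split => [[]|[[]|]].
- by exists p%:E.
- move=> x x' x0 x'0; rewrite pk !lee_fin => h; apply: strict_lt => /=; rewrite lte_fin.
  case: h => [[xx xp]|[px xx]].
    have x'p : x' <= p by lra.
    by rewrite xp x'p ltr_pM2l //; lra.
  have x'p : ~~ (x' <= p) by rewrite -ltNge; lra.
  rewrite (negbTE x'p); case: ifP => xp.
    have -> : x = p by apply/eqP; rewrite eq_le xp px.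
    by rewrite subrr mulr0; apply: mulr_gt0 => //; lra.
  by rewrite ltr_pM2l //; lra.
Qed.



Lemma sp_strict (R : realType) (Ri : pref R) (x x' : R) : single_peaked Ri ->
  0 <= x -> 0 <= x' ->
  ((x' < x /\ (x%:E <= peak Ri)%E) \/ ((peak Ri <= x%:E)%E /\ x < x')) ->
  strict Ri x%:E x'%:E.
Proof. by case=> _ [_ h]; apply: h. Qed.

Lemma sp_refl (R : realType) (Ri : pref R) (x : R) : single_peaked Ri -> 0 <= x ->
  Ri x%:E x%:E.
Proof. by case=> [[[h _] _] _] x0; apply: h; rewrite /cons_set /= lee_fin. Qed.

Lemma sp_peak_ge0 (R : realType) (Ri : pref R) : single_peaked Ri -> (0 <= peak Ri)%E.
Proof.
case=> _ [[p hp] _].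
have pin : peak_set Ri p by rewrite hp.
have -> : peak Ri = p by rewrite /peak; apply: xget_unique => // y; rewrite hp.
by case: pin.
Qed.

Lemma betw (R : realType) (Ri : pref R) (x c : R) : single_peaked Ri ->
  0 <= x -> 0 <= c ->
  ((peak Ri <= x%:E)%E /\ x <= c \/ c <= x /\ (x%:E <= peak Ri)%E) ->
  Ri x%:E c%:E.
Proof.
move=> sp x0 c0 h.
have [->|xc] := eqVneq x c; first exact: sp_refl.
suff : strict Ri x%:E c%:E by case.
apply: sp_strict => //.
case: h => [[h1 h2]|[h1 h2]]; [right|left]; split => //.
  by rewrite lt_neqAle xc.
by rewrite lt_neqAle eq_sym xc.
Qed.

Lemma upd_at (R : realType) n (Rp : profile R n) i Ri : upd Rp i Ri i = Ri.
Proof. by rewrite /upd eqxx. Qed.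

Lemma economy_upd (R : realType) n (Rp : profile R n) i Ri Om :
  (forall j, j != i -> single_peaked (Rp j)) -> single_peaked Ri -> 0 < Om ->
  economy (upd Rp i Ri) Om.
Proof.
move=> h sp Om0; split => // j; rewrite /upd.
by case: eqP => [//|/eqP]; apply: h.
Qed.

Lemma c_ge0 (R : realType) n (Om : R) : 0 < Om -> 0 <= Om / n%:R.
Proof. by move=> h; apply: divr_ge0 => //; apply: ltW. Qed.

Lemma n_c (R : realType) n (Om : R) : (0 < n)%N -> n%:R * (Om / n%:R) = Om.
Proof.
by move=> n0; rewrite mulrC divfK // pnatr_eq0 -lt0n.
Qed.

Lemma nonsimple_c (R : realType) n (phi : ruleT R n) Rp Om j :
  simple_rule phi -> economy Rp Om -> peak (Rp j) = (Om / n%:R)%:E ->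
  phi Rp Om j = Om / n%:R.
Proof.
move=> [_ S] eco pj.
have [nu [Hnu [_ [_ Hns]]]] := S Rp Om eco.
have ns : ~~ simple_agent Rp Om j.
  by apply/asboolPn; rewrite pj ltxx; case=> [[_ h]|[_ h]].
have [n0 nle] := Hnu j ns.
have nu0 : nu j = 0.
  by move: nle; rewrite pj /= subrr normr0 lee_fin => h; apply/eqP; rewrite eq_le h n0.
have [h1 h2] := Hns j ns.
case/orP: (le_total 0%E (excess Rp Om)) => hz.
  by rewrite h1 // nu0 addr0.
by rewrite h2 // nu0 subr0.
Qed.

Lemma simple_facts (R : realType) n (phi : ruleT R n) Rp Om i :
  simple_rule phi -> economy Rp Om ->
  ((0 <= excess Rp Om)%E -> ((phi Rp Om i)%:E <= peak (Rp i))%E) /\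
  ((excess Rp Om <= 0)%E -> (peak (Rp i) <= (phi Rp Om i)%:E)%E) /\
  ((peak (Rp i) <= (phi Rp Om i)%:E)%E /\ phi Rp Om i <= Om / n%:R \/
    Om / n%:R <= phi Rp Om i /\ ((phi Rp Om i)%:E <= peak (Rp i))%E).
Proof.
move=> [_ S] eco.
have [nu [Hnu [_ [Hs Hns]]]] := S Rp Om eco.
have p0 := sp_peak_ge0 (eco.1 i).
case: (boolP (simple_agent Rp Om i)) => hs.
  rewrite (Hs i hs); split => // ; split => //.
  case/orP: (le_total (peak (Rp i)) (Om / n%:R)%:E) => h.
    left; split => //.
    move: h; rewrite -(Hs i hs) lee_fin //.
  right; split => //.
  by move: h; rewrite -(Hs i hs) lee_fin.
have [n0 nle] := Hnu i hs.
have [h1 h2] := Hns i hs.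
move/asboolPn: hs => hs.
have up : (0 <= excess Rp Om)%E ->
   (Om / n%:R) <= phi Rp Om i /\ ((phi Rp Om i)%:E <= peak (Rp i))%E.
  move=> hz; rewrite (h1 hz).
  have cp : ((Om / n%:R)%:E <= peak (Rp i))%E.
    by rewrite leNgt; apply/negP => h; apply: hs; left.
  split; first by rewrite lerDl.
  move: nle cp; case: (peak (Rp i)) => [r| |] /=.
  - rewrite !lee_fin => h cr; rewrite ger0_norm ?subr_ge0 // in h.
    lra.
  - by move=> _ _; rewrite leey.
  - by move=> _; rewrite leeNy_eq.
have down : (excess Rp Om <= 0)%E ->
   phi Rp Om i <= (Om / n%:R) /\ (peak (Rp i) <= (phi Rp Om i)%:E)%E.
  move=> hz; rewrite (h2 hz).
  have cp : (peak (Rp i) <= (Om / n%:R)%:E)%E.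
    by rewrite leNgt; apply/negP => h; apply: hs; right.
  split; first by rewrite gerBl.
  move: nle cp p0; case: (peak (Rp i)) => [r| |] /=.
  - rewrite !lee_fin => h cr r0; rewrite ler0_norm ?subr_le0 // in h.
    lra.
  - by move=> _; rewrite leye_eq.
  - by move=> _ _; rewrite leeNy_eq.
split; first by case/up.
split; first by case/down.
case/orP: (le_total 0%E (excess Rp Om)) => hz.
  by right; apply: up.
by left; case: (down hz).
Qed.

Lemma sum_c (R : realType) n (c : R) : \sum_(j < n) c = c *+ n.
Proof. by rewrite sumr_const card_ord. Qed.

Lemma all_c (R : realType) n (phi : ruleT R n) Rq Om i :
  simple_rule phi -> is_rule phi -> (0 < n)%N -> economy Rq Om ->
  (forall j, j != i -> peak (Rq j) = (Om / n%:R)%:E) ->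
  phi Rq Om i = Om / n%:R.
Proof.
move=> S isr n0 eco hp.
have hj : forall j, j != i -> phi Rq Om j = Om / n%:R.
  by move=> j ji; apply: nonsimple_c => //; apply: hp.
have Hs : \sum_(j < n) (Om / n%:R) = Om by rewrite sum_c -[(Om / n%:R) *+ n]mulr_natl n_c.
have := (isr Rq Om eco).2.
rewrite -{2}Hs (bigD1 i) //= [RHS](bigD1 i) //=.
rewrite (eq_bigr (fun _ => Om / n%:R)) //.
by move/addIr.
Qed.

Lemma eq_of_sides (R : realType) n (x y : 'I_n -> R) :
  \sum_(j < n) x j = \sum_(j < n) y j ->
  (forall k, x k <= y k) -> forall k, x k = y k.
Proof.
move=> hs hle k.
have h : \sum_(j < n) (y j - x j) = 0 by rewrite sumrB hs subrr.
have hk : y k - x k = 0.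
  by apply: (psumr_eq0P _ h) => // j _; rewrite subr_ge0.
by apply/eqP; rewrite eq_sym -subr_eq0 hk.
Qed.

Lemma simple_eff (R : realType) n (phi : ruleT R n) :
  simple_rule phi -> is_rule phi -> efficient phi.
Proof.
move=> S isr Rp Om eco [x [x0 [sx [xR [j [sj1 sj2]]]]]].
have [phi0 sphi] := isr Rp Om eco.
suff E : forall k, x k = phi Rp Om k by apply: sj2; rewrite -E; apply: sp_refl (eco.1 j) (x0 j).
case/orP: (le_total 0%E (excess Rp Om)) => hz.
  move=> k; apply/esym; move: k; apply: eq_of_sides; first by rewrite sx sphi.
  move=> k; rewrite leNgt; apply/negP => xk.
  have [h1 _] := simple_facts k S eco.
  have : strict (Rp k) (phi Rp Om k)%:E (x k)%:E.
    by apply: sp_strict => //; [apply: eco.1| left; split => //; apply: h1].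
  by case=> _; apply; apply: xR.
apply: eq_of_sides; first by rewrite sx sphi.
move=> k; rewrite leNgt; apply/negP => xk.
have [_ [h2 _]] := simple_facts k S eco.
have : strict (Rp k) (phi Rp Om k)%:E (x k)%:E.
  by apply: sp_strict => //; [apply: eco.1| right; split => //; apply: h2].
by case=> _; apply; apply: xR.
Qed.

Lemma simple_edg (R : realType) n (phi : ruleT R n) :
  simple_rule phi -> equal_division_guarantee phi.
Proof.
move=> S Rp Om i eco pk; rewrite (nonsimple_c S eco pk).
by split; apply: sp_refl (eco.1 i) (c_ge0 _ eco.2).
Qed.

Lemma simple_nom (R : realType) n (phi : ruleT R n) :
  simple_rule phi -> is_rule phi -> (0 < n)%N -> NOM phi.
Proof.
move=> S isr n0 i Ri Ri' Om spi spi' Om0 [_ H].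
have c0 := c_ge0 n Om0.
have [sp0 pk0] := mkpref_sp c0 ltr01 ltr01.
have oc : option_set phi i Ri' Om (Om / n%:R).
  exists (fun _ => mkpref (Om / n%:R) 1 1); split => //.
  apply/esym; apply: all_c => //; first exact: economy_upd.
  by move=> j ji; rewrite /upd (negbTE ji).
have [x [Rq [hq ->]] [_ st]] := H _ oc.
apply: st; apply: betw => //; first by have [] := isr _ _ (economy_upd hq spi Om0).
have [_ [_ h]] := simple_facts i S (economy_upd hq spi Om0).
by rewrite upd_at in h.
Qed.



Lemma edg_c (R : realType) n (phi : ruleT R n) Rq Om i :
  equal_division_guarantee phi -> is_rule phi -> economy Rq Om ->
  peak (Rq i) = (Om / n%:R)%:E -> phi Rq Om i = Om / n%:R.
Proof.
move=> E isr eco pk.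
have [h1 h2] := E Rq Om i eco pk.
have f0 := (isr Rq Om eco).1 i.
have c0 := c_ge0 n eco.2.
apply/eqP; apply/negP => /negP ne.
have : strict (Rq i) (Om / n%:R)%:E (phi Rq Om i)%:E.
  apply: sp_strict => //; first exact: eco.1.
  rewrite pk lexx; case: (ltgtP (phi Rq Om i) (Om / n%:R)) => h.
  - by left.
  - by right.
  - by rewrite h eqxx in ne.
by case=> _.
Qed.

Lemma core (R : realType) n (phi : ruleT R n) Rp Om i Rs :
  own_peak_only phi -> equal_division_guarantee phi -> NOM phi -> is_rule phi ->
  economy Rp Om -> single_peaked Rs -> peak Rs = peak (Rp i) ->
  strict Rs (Om / n%:R)%:E (phi Rp Om i)%:E -> False.
Proof.
move=> O E N isr eco sps pks st.
have c0 := c_ge0 n eco.2.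
have [sp0 pk0] := mkpref_sp c0 ltr01 ltr01.
have others : forall j, j != i -> single_peaked (Rp j) by move=> j _; apply: eco.1.
have hc : forall Rq, (forall j, j != i -> single_peaked (Rq j)) ->
    phi (upd Rq i (mkpref (Om / n%:R) 1 1)) Om i = Om / n%:R.
  move=> Rq hq; apply: edg_c => //; first exact: (economy_upd hq sp0 eco.2).
  by rewrite upd_at.
have hs : phi (upd Rp i Rs) Om i = phi Rp Om i by apply/esym; apply: (O Rp Om i Rs eco sps pks).
apply: (N i Rs (mkpref (Om / n%:R) 1 1) Om sps sp0 eco.2); split.
  by exists Rp; split => //; rewrite hc // hs.
move=> x' [Rq [hq ->]]; rewrite hc //.
by exists (phi Rp Om i) => //; exists Rp; split => //; rewrite hs.
Qed.

Lemma claimB_low (R : realType) n (phi : ruleT R n) Rp Om i :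
  own_peak_only phi -> equal_division_guarantee phi -> NOM phi -> is_rule phi ->
  economy Rp Om ->
  ~ (((phi Rp Om i)%:E < peak (Rp i))%E /\ phi Rp Om i < Om / n%:R).
Proof.
move=> O E N isr eco [h1 h2].
have f0 := (isr Rp Om eco).1 i.
have c0 := c_ge0 n eco.2.
have p0 := sp_peak_ge0 (eco.1 i).
have [cp|pc] := leP (Om / n%:R)%:E (peak (Rp i)).
  apply: (core (i := i) (Rs := Rp i) O E N isr eco (eco.1 i)) => //.
  by apply: sp_strict => //; first exact: eco.1; left.
move: h1 pc p0; case Ep: (peak (Rp i)) => [r| |] //=; rewrite ?lte_fin ?lee_fin => h1 pc r0.
  set K := 2 * (Om / n%:R - r) / (r - phi Rp Om i).
  have K0 : 0 < K by apply: divr_gt0; lra.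
  have [spK pkK] := mkpref_sp r0 K0 ltr01.
  apply: (core (i := i) (Rs := mkpref r K 1) O E N isr eco spK); first by rewrite pkK Ep.
  apply: strict_lt => /=; rewrite lte_fin.
  have -> : (Om / n%:R <= r) = false by apply/negbTE; rewrite -ltNge.
  rewrite (ltW h1) /K divfK; first lra.
  by rewrite subr_eq0; apply/negP => /eqP h; lra.
Qed.

Lemma claimB_high (R : realType) n (phi : ruleT R n) Rp Om i :
  own_peak_only phi -> equal_division_guarantee phi -> NOM phi -> is_rule phi ->
  economy Rp Om ->
  ~ ((peak (Rp i) < (phi Rp Om i)%:E)%E /\ Om / n%:R < phi Rp Om i).
Proof.
move=> O E N isr eco [h1 h2].
have f0 := (isr Rp Om eco).1 i.
have c0 := c_ge0 n eco.2.
have p0 := sp_peak_ge0 (eco.1 i).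
have [pc|cp] := leP (peak (Rp i)) (Om / n%:R)%:E.
  apply: (core (i := i) (Rs := Rp i) O E N isr eco (eco.1 i)) => //.
  by apply: sp_strict => //; first exact: eco.1; right.
move: h1 cp p0; case Ep: (peak (Rp i)) => [r| |] //=; rewrite ?lte_fin ?lee_fin => h1 cp r0.
  set K := 2 * (r - Om / n%:R) / (phi Rp Om i - r).
  have K0 : 0 < K by apply: divr_gt0; lra.
  have [spK pkK] := mkpref_sp r0 ltr01 K0.
  apply: (core (i := i) (Rs := mkpref r 1 K) O E N isr eco spK); first by rewrite pkK Ep.
  apply: strict_lt => /=; rewrite lte_fin.
  have -> : (phi Rp Om i <= r) = false by apply/negbTE; rewrite -ltNge.
  rewrite (ltW cp) /K divfK; first lra.
  by rewrite subr_eq0; apply/negP => /eqP h; lra.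
Qed.

Lemma transfer (R : realType) n (phi : ruleT R n) Rp Om i j (d : R) :
  efficient phi -> is_rule phi -> economy Rp Om -> i != j ->
  0 <= phi Rp Om i + d -> 0 <= phi Rp Om j - d ->
  strict (Rp i) (phi Rp Om i + d)%:E (phi Rp Om i)%:E ->
  strict (Rp j) (phi Rp Om j - d)%:E (phi Rp Om j)%:E -> False.
Proof.
move=> Ef isr eco ij hi hj si sj.
have [f0 sf] := isr Rp Om eco.
pose x k := phi Rp Om k + (if k == i then d else 0) - (if k == j then d else 0).
have xi : x i = phi Rp Om i + d by rewrite /x eqxx (negbTE ij) subr0.
have xj : x j = phi Rp Om j - d by rewrite /x eqxx eq_sym (negbTE ij) addr0.
apply: (Ef Rp Om eco); exists x; split; [|split; [|split]].
- move=> k; case: (eqVneq k i) => [->|ki]; first by rewrite xi.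
  case: (eqVneq k j) => [->|kj]; first by rewrite xj.
  by rewrite /x (negbTE ki) (negbTE kj) addr0 subr0.
- rewrite /x sumrB big_split /= sf.
  by rewrite -!big_mkcond /= !big_pred1_eq addrK.
- move=> k; case: (eqVneq k i) => [->|ki]; first by rewrite xi; case: si.
  case: (eqVneq k j) => [->|kj]; first by rewrite xj; case: sj.
  rewrite /x (negbTE ki) (negbTE kj) addr0 subr0; exact: sp_refl (eco.1 k) (f0 k).
- by exists i; rewrite xi.
Qed.

Lemma gap (R : realType) (p : \bar R) (x : R) :
  (x%:E < p)%E -> exists2 e, 0 < e & ((x + e)%:E <= p)%E.
Proof.
case: p => [s| |] //=.
- by rewrite lte_fin => h; exists (s - x); [lra| rewrite lee_fin; lra].
- by move=> _; exists 1 => //; rewrite leey.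
Qed.

Lemma fin_between (R : realType) (p : \bar R) (x : R) :
  (0 <= p)%E -> (p <= x%:E)%E -> p = (fine p)%:E.
Proof. by case: p => [s| |] //=; rewrite ?leye_eq ?leeNy_eq. Qed.

Lemma sideA_ge (R : realType) n (phi : ruleT R n) Rp Om i :
  efficient phi -> is_rule phi -> economy Rp Om ->
  (0 <= excess Rp Om)%E -> ((phi Rp Om i)%:E <= peak (Rp i))%E.
Proof.
move=> Ef isr eco hz; rewrite leNgt; apply/negP => hi.
have [f0 sf] := isr Rp Om eco.
have p0 : forall j, (0 <= peak (Rp j))%E by move=> j; apply: sp_peak_ge0 (eco.1 j).
have [[j hj]|none] := pselect (exists j, ((phi Rp Om j)%:E < peak (Rp j))%E).
  have ji : j != i by apply/eqP => ji; move: hj; rewrite ji => hj; move: (lt_trans hi hj); rewrite ltxx.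
  have [e e0 he] := gap hj.
  have Epi := fin_between (p0 i) (ltW hi).
  move: hi; rewrite Epi lte_fin => hi.
  set r := fine (peak (Rp i)) in Epi hi.
  have r0 : 0 <= r by rewrite -lee_fin -Epi.
  set eps := Num.min e (phi Rp Om i - r).
  have eps0 : 0 < eps by rewrite lt_min e0 subr_gt0 hi.
  have eps1 : eps <= e by rewrite ge_min lexx.
  have eps2 : eps <= phi Rp Om i - r by rewrite ge_min lexx orbT.
  apply: (transfer (i := j) (j := i) (d := eps) Ef isr eco ji).
  - by apply: addr_ge0 => //; apply: ltW.
  - lra.
  - apply: sp_strict; first exact: eco.1.
    + by apply: addr_ge0 => //; apply: ltW.
    + by [].
    left; split; first lra.
    by apply: le_trans he; rewrite lee_fin; lra.
  - apply: sp_strict; first exact: eco.1.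
    + lra.
    + by [].
    by right; rewrite Epi lee_fin; split; lra.
have hle : forall j, (peak (Rp j) <= (phi Rp Om j)%:E)%E.
  by move=> j; rewrite leNgt; apply/negP => h; apply: none; exists j.
have Ep : \sum_(j < n) peak (Rp j) = (\sum_(j < n) fine (peak (Rp j)))%:E.
  by rewrite -sumEFin; apply: eq_bigr => j _; apply: fin_between (p0 j) (hle j).
move: hz; rewrite /excess Ep -EFinB lee_fin subr_ge0 => hz.
have : \sum_(j < n) fine (peak (Rp j)) < \sum_(j < n) phi Rp Om j.
  rewrite (bigD1 i) //= [X in _ < X](bigD1 i) //=.
  apply: ltr_leD.
    by rewrite -lte_fin -(fin_between (p0 i) (hle i)).
  by apply: ler_sum => j _; rewrite -lee_fin -(fin_between (p0 j) (hle j)).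
by rewrite sf; lra.
Qed.

Lemma sideA_le (R : realType) n (phi : ruleT R n) Rp Om i :
  efficient phi -> is_rule phi -> economy Rp Om ->
  (excess Rp Om <= 0)%E -> (peak (Rp i) <= (phi Rp Om i)%:E)%E.
Proof.
move=> Ef isr eco hz; rewrite leNgt; apply/negP => hi.
have [f0 sf] := isr Rp Om eco.
have p0 : forall j, (0 <= peak (Rp j))%E by move=> j; apply: sp_peak_ge0 (eco.1 j).
move: hz; rewrite /excess sube_le0 => hz.
have pOm : forall k, (peak (Rp k) <= Om%:E)%E.
  move=> k; apply: le_trans hz; rewrite (bigD1 k) //=; apply: leeDl.
  by apply: sume_ge0 => j _; apply: p0.
have Epk : forall k, peak (Rp k) = (fine (peak (Rp k)))%:E.
  by move=> k; apply: fin_between (p0 k) (pOm k).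
have [[j hj]|none] := pselect (exists j, (peak (Rp j) < (phi Rp Om j)%:E)%E).
  have ji : i != j by apply/eqP => ji; move: hj; rewrite -ji => hj; move: (lt_trans hi hj); rewrite ltxx.
  have [e e0 he] := gap hi.
  move: hj; rewrite (Epk j) lte_fin => hj.
  set r := fine (peak (Rp j)) in hj.
  have r0 : 0 <= r by rewrite -lee_fin -(Epk j).
  set eps := Num.min e (phi Rp Om j - r).
  have eps0 : 0 < eps by rewrite lt_min e0 subr_gt0 hj.
  have eps1 : eps <= e by rewrite ge_min lexx.
  have eps2 : eps <= phi Rp Om j - r by rewrite ge_min lexx orbT.
  apply: (transfer (d := eps) Ef isr eco ji).
  - by apply: addr_ge0 => //; apply: ltW.
  - lra.
  - apply: sp_strict; first exact: eco.1.
    + by apply: addr_ge0 => //; apply: ltW.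
    + by [].
    left; split; first lra.
    by apply: le_trans he; rewrite lee_fin; lra.
  - apply: sp_strict; first exact: eco.1.
    + lra.
    + by [].
    by right; rewrite (Epk j) -/r lee_fin; split; lra.
have hle : forall j, ((phi Rp Om j)%:E <= peak (Rp j))%E.
  by move=> j; rewrite leNgt; apply/negP => h; apply: none; exists j.
have Ep : \sum_(j < n) peak (Rp j) = (\sum_(j < n) fine (peak (Rp j)))%:E.
  by rewrite -sumEFin; apply: eq_bigr => j _; apply: Epk.
move: hz; rewrite Ep lee_fin => hz.
have : \sum_(j < n) phi Rp Om j < \sum_(j < n) fine (peak (Rp j)).
  rewrite (bigD1 i) //= [X in _ < X](bigD1 i) //=.
  apply: ltr_leD.
    by rewrite -lte_fin -(Epk i).
  by apply: ler_sum => j _; rewrite -lee_fin -(Epk j).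
by rewrite sf; lra.
Qed.



Definition props (R : realType) n (phi : ruleT R n) :=
  own_peak_only phi /\ efficient phi /\ equal_division_guarantee phi /\ NOM phi.

Lemma fact_simple (R : realType) n (phi : ruleT R n) Rp Om i :
  props phi -> is_rule phi -> economy Rp Om -> simple_agent Rp Om i ->
  (phi Rp Om i)%:E = peak (Rp i).
Proof.
move=> [O [Ef [E N]]] isr eco /asboolP [[hz hp]|[hz hp]].
  have h1 := sideA_ge i Ef isr eco hz.
  apply/eqP; rewrite eq_le h1 /= leNgt; apply/negP => h.
  apply: (claimB_low (i := i) O E N isr eco); split => //.
  by have := lt_trans h hp; rewrite lte_fin.
have h1 := sideA_le i Ef isr eco hz.
apply/eqP; rewrite eq_le h1 /= andbT leNgt; apply/negP => h.
apply: (claimB_high (i := i) O E N isr eco); split => //.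
by have := lt_trans hp h; rewrite lte_fin.
Qed.

Lemma fact_ns_ge (R : realType) n (phi : ruleT R n) Rp Om i :
  props phi -> is_rule phi -> economy Rp Om -> ~~ simple_agent Rp Om i ->
  (0 <= excess Rp Om)%E -> Om / n%:R <= phi Rp Om i.
Proof.
move=> [O [Ef [E N]]] isr eco /asboolPn hs hz.
have cp : ((Om / n%:R)%:E <= peak (Rp i))%E.
  by rewrite leNgt; apply/negP => h; apply: hs; left.
rewrite leNgt; apply/negP => h.
apply: (claimB_low (i := i) O E N isr eco); split => //.
by apply: lt_le_trans cp; rewrite lte_fin.
Qed.

Lemma fact_ns_le (R : realType) n (phi : ruleT R n) Rp Om i :
  props phi -> is_rule phi -> economy Rp Om -> ~~ simple_agent Rp Om i ->
  (excess Rp Om <= 0)%E -> phi Rp Om i <= Om / n%:R.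
Proof.
move=> [O [Ef [E N]]] isr eco /asboolPn hs hz.
have cp : (peak (Rp i) <= (Om / n%:R)%:E)%E.
  by rewrite leNgt; apply/negP => h; apply: hs; right.
rewrite leNgt; apply/negP => h.
apply: (claimB_high (i := i) O E N isr eco); split => //.
by apply: le_lt_trans cp _; rewrite lte_fin.
Qed.

Lemma absb (R : realType) (f r c : R) :
  ~ (f < r /\ f < c) -> ~ (r < f /\ c < f) -> `|f - c| <= `|r - c|.
Proof.
move=> h1 h2.
case: (lerP c f) => cf.
  case: (lerP f r) => fr.
    by have := ler_norm (r - c); lra.
  have : f <= c by rewrite leNgt; apply/negP => h; apply: h2.
  by move=> fc; have := normr_ge0 (r - c); lra.
case: (lerP r f) => rf.
  by rewrite (ltr0_norm (x := r - c)); lra.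
by exfalso; apply: h1.
Qed.

Lemma props_simple (R : realType) n (phi : ruleT R n) :
  (0 < n)%N -> is_rule phi -> props phi -> simple_rule phi.
Proof.
move=> n0 isr P; have P' := P; case: P' => [O [Ef [E N]]].
split => // Rp Om eco.
have [f0 sf] := isr Rp Om eco.
have p0 : forall j, (0 <= peak (Rp j))%E by move=> j; apply: sp_peak_ge0 (eco.1 j).
set c := Om / n%:R.
exists (fun j => `|phi Rp Om j - c|).
have Hs := fun j => fact_simple P isr eco (i := j).
have Hge := fun j => fact_ns_ge P isr eco (i := j).
have Hle := fun j => fact_ns_le P isr eco (i := j).
split.
  move=> i _; split => //.
  have h1 := claimB_low (i := i) O E N isr eco.
  have h2 := claimB_high (i := i) O E N isr eco.
  move: h1 h2 (p0 i); case: (peak (Rp i)) => [r| |] //= h1 h2 _.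
    rewrite lee_fin; apply: absb.
      by case=> a b; apply: h1; rewrite lte_fin.
    by case=> a b; apply: h2; rewrite lte_fin.
  by rewrite leey.
split; last first.
  split; first by move=> i hs; apply: Hs.
  move=> i hs; split => hz.
    by have := Hge i hs hz; rewrite /c => h; rewrite ger0_norm ?subr_ge0 // [c + _]addrC subrK.
  by have := Hle i hs hz; rewrite /c => h; rewrite ler0_norm ?subr_le0 //; lra.
set S := simple_agent Rp Om.
have Hk : \sum_(j < n | ~~ S j) c = #|[set j | ~~ S j]|%:R * c.
  rewrite mulr_natl -sumr_const; apply: eq_bigl => j; apply/idP/idP => [h|/set_mem //]; exact: mem_set.
have HA : \sum_(j < n | S j) peak (Rp j) = (\sum_(j < n | S j) phi Rp Om j)%:E.
  by rewrite -sumEFin; apply: eq_bigr => j hj; rewrite Hs.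
have HOm : Om = \sum_(j < n | S j) phi Rp Om j + \sum_(j < n | ~~ S j) phi Rp Om j.
  by rewrite -{1}sf (bigID S).
rewrite /Eterm -/S HA -EFinD /= sumEFin; congr (_%:E).
set A := \sum_(j < n | S j) phi Rp Om j.
set B := \sum_(j < n | ~~ S j) phi Rp Om j.
set k := #|[set j | ~~ S j]|%:R.
have -> : Om - (A + k * c) = B - k * c by rewrite {1}HOm opprD addrACA subrr add0r.
case/orP: (le_total 0%E (excess Rp Om)) => hz.
  have -> : \sum_(j < n | ~~ S j) `|phi Rp Om j - c| = \sum_(j < n | ~~ S j) (phi Rp Om j - c).
    by apply: eq_bigr => j hj; rewrite ger0_norm // subr_ge0; exact: (Hge j hj hz).
  rewrite sumrB Hk -/B ger0_norm //.
  rewrite -Hk -sumrB; apply: sumr_ge0 => j hj; rewrite subr_ge0; exact: (Hge j hj hz).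
have -> : \sum_(j < n | ~~ S j) `|phi Rp Om j - c| = \sum_(j < n | ~~ S j) (c - phi Rp Om j).
  by apply: eq_bigr => j hj; rewrite ler0_norm ?opprB // subr_le0; exact: (Hle j hj hz).
rewrite sumrB Hk -/B ler0_norm ?opprB //.
rewrite subr_le0 -Hk; apply: ler_sum => j hj; exact: (Hle j hj hz).
Qed.


Local Close Scope classical_set_scope.
Unset Implicit Arguments.

Theorem theorem2 (R : realType) (n : nat) (phi : ruleT R n) :
  (0 < n)%N -> is_rule phi ->
  ((own_peak_only phi /\ efficient phi /\ equal_division_guarantee phi /\ NOM phi)
   <-> simple_rule phi).
Proof.
move=> n0 isr; split.
  by move=> P; apply: props_simple.
move=> S; split; first exact: S.1.
split; first exact: simple_eff.
split; first exact: simple_edg.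
exact: simple_nom.
Qed.
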